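(* Let $\varphi:\mathbb{H}\to\mathbb{H}$ be a linear isometry with $\varphi(1)=1$. Then $\varphi(\varphi(x)x)=\varphi(x)x$ for all $x\in\mathbb{H}$ if and only if $\varphi\in\{I_{\mathbb{H}}\}\cup\mathcal{I}_1^-$. In particular $I_{\mathbb{H}}$ is the only proper linear isometry satisfying this condition.
   Context: $\mathbb{H}$ is the quaternions with Euclidean norm. $\mathcal{I}_1^-$ is the set of involutive linear isometries of $\mathbb{H}$ with negative determinant fixing $1$; equivalently $\mathcal{I}_1^-=\{\sigma_{\mathbb{H}}\}\cup\{x\mapsto a\bar x\bar a: a\in\mathrm{Im}(\mathbb{H}),\ |a|=1\}$, where $\sigma_{\mathbb{H}}(x)=\bar x$. A proper isometry is one with positive determinant. *)

(* Defs.v *)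
From HB Require Import structures.
From mathcomp Require Import all_boot all_order all_algebra.
From mathcomp Require Import reals.
Set Implicit Arguments. Unset Strict Implicit. Unset Printing Implicit Defensive.
Import Order.TTheory GRing.Theory Num.Theory.
Local Open Scope ring_scope.

(* q = q0 + q1 i + q2 j + q3 k *)
Record quat (R : realType) := Quat { q0 : R; q1 : R; q2 : R; q3 : R }.

Section Quat.
Variable R : realType.
Implicit Types x y a : quat R.

Definition qadd x y := Quat (q0 x + q0 y) (q1 x + q1 y) (q2 x + q2 y) (q3 x + q3 y).
Definition qscale (c : R) x := Quat (c * q0 x) (c * q1 x) (c * q2 x) (c * q3 x).
Definition qone : quat R := Quat 1 0 0 0.
Definition qmul x y :=
  Quat (q0 x * q0 y - q1 x * q1 y - q2 x * q2 y - q3 x * q3 y)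
       (q0 x * q1 y + q1 x * q0 y + q2 x * q3 y - q3 x * q2 y)
       (q0 x * q2 y - q1 x * q3 y + q2 x * q0 y + q3 x * q1 y)
       (q0 x * q3 y + q1 x * q2 y - q2 x * q1 y + q3 x * q0 y).
Definition qconj x := Quat (q0 x) (- q1 x) (- q2 x) (- q3 x).
Definition qnorm x := Num.sqrt (q0 x ^+ 2 + q1 x ^+ 2 + q2 x ^+ 2 + q3 x ^+ 2).
Definition qpure x := q0 x = 0.

Definition qcoord x (i : 'I_4) : R :=
  match val i with 0 => q0 x | 1 => q1 x | 2 => q2 x | _ => q3 x end.
Definition qbasis (i : 'I_4) : quat R :=
  match val i with 0 => Quat 1 0 0 0 | 1 => Quat 0 1 0 0
                 | 2 => Quat 0 0 1 0 | _ => Quat 0 0 0 1 end.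

Definition qlinear (phi : quat R -> quat R) :=
  (forall x y, phi (qadd x y) = qadd (phi x) (phi y)) /\
  (forall c x, phi (qscale c x) = qscale c (phi x)).
Definition qisometry (phi : quat R -> quat R) := forall x, qnorm (phi x) = qnorm x.

Definition qmat (phi : quat R -> quat R) : 'M[R]_4 :=
  \matrix_(i < 4, j < 4) qcoord (phi (qbasis j)) i.
Definition qdet (phi : quat R -> quat R) : R := \det (qmat phi).

Definition in_I1minus (phi : quat R -> quat R) :=
  (forall x, phi x = qconj x) \/
  (exists a, qpure a /\ qnorm a = 1 /\ forall x, phi x = qmul (qmul a (qconj x)) (qconj a)).
End Quat.

(* Main.v *)
Require Import Defs.
From HB Require Import structures.
From mathcomp Require Import all_boot all_order all_algebra.
From mathcomp Require Import reals ring lra.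
From Stdlib Require Import Classical.
Set Implicit Arguments. Unset Strict Implicit. Unset Printing Implicit Defensive.
Import Order.TTheory GRing.Theory Num.Theory.
Local Open Scope ring_scope.

Section Vec.
Variable R : realType.
Record v3 := V3 { c1 : R; c2 : R; c3 : R }.
Definition vadd u v := V3 (c1 u + c1 v) (c2 u + c2 v) (c3 u + c3 v).
Definition vopp u := V3 (- c1 u) (- c2 u) (- c3 u).
Definition vscale (s : R) u := V3 (s * c1 u) (s * c2 u) (s * c3 u).
Definition dot u v := c1 u * c1 v + c2 u * c2 v + c3 u * c3 v.
Definition cross u v := V3 (c2 u * c3 v - c3 u * c2 v) (c3 u * c1 v - c1 u * c3 v)
  (c1 u * c2 v - c2 u * c1 v).

Lemma vext u v : c1 u = c1 v -> c2 u = c2 v -> c3 u = c3 v -> u = v.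
Proof. by case: u; case: v => /= ??? ??? -> -> ->. Qed.

Lemma dotDl a b c : dot (vadd a b) c = dot a c + dot b c.
Proof. rewrite /dot /=; ring. Qed.
Lemma dotDr a b c : dot c (vadd a b) = dot c a + dot c b.
Proof. rewrite /dot /=; ring. Qed.
Lemma dotNl a c : dot (vopp a) c = - dot a c.
Proof. rewrite /dot /=; ring. Qed.
Lemma dotNr a c : dot c (vopp a) = - dot c a.
Proof. rewrite /dot /=; ring. Qed.
Lemma dotC a b : dot a b = dot b a.
Proof. rewrite /dot /=; ring. Qed.

Lemma dot0 u : dot u u = 0 -> u = V3 0 0 0.
Proof.
rewrite /dot => h.
have h1 : c1 u * c1 u = 0 by nra.
have h2 : c2 u * c2 u = 0 by nra.
have h3 : c3 u * c3 u = 0 by nra.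
apply: vext => /=; apply/eqP.
- by rewrite -[_ == 0]orbb -mulf_eq0 h1.
- by rewrite -[_ == 0]orbb -mulf_eq0 h2.
- by rewrite -[_ == 0]orbb -mulf_eq0 h3.
Qed.

Lemma core (M : v3 -> v3)
 (MD : forall u v, M (vadd u v) = vadd (M u) (M v))
 (MZ : forall s v, M (vscale s v) = vscale s (M v))
 (O : forall v, dot (M v) (M v) = dot v v)
 (I : forall v, M (M v) = v)
 (C : forall v, M (cross (M v) v) = cross (M v) v) :
 (forall v, M v = v) \/ (forall v, M v = vopp v) \/
 exists u, dot u u != 0 /\
   forall w, vscale (dot u u) (vadd w (vopp (M w))) = vscale (2 * dot u w) u.
Proof.
have MN v : M (vopp v) = vopp (M v).
  have -> : vopp v = vscale (-1) v by apply: vext => /=; ring.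
  by rewrite MZ; apply: vext => /=; ring.
have Op a b : dot (M a) (M b) = dot a b.
  have := O (vadd a b); rewrite MD !dotDl !dotDr O O (dotC (M b)) (dotC b).
  lra.
have orth a b : M a = a -> M b = vopp b -> dot a b = 0.
  move=> ha hb; have := Op a b; rewrite ha hb dotNr; lra.
case: (classic (forall v, M v = v)) => [h|hnI]; first by left.
case: (classic (forall v, M v = vopp v)) => [h|hnN]; first by right; left.
right; right.
have [e he] := not_all_ex_not _ _ hnI.
have [f hf] := not_all_ex_not _ _ hnN.
pose u := vadd e (vopp (M e)); pose q := vadd f (M f).
have Mu : M u = vopp u by rewrite /u MD MN I; apply: vext => /=; ring.
have Mq : M q = q by rewrite /q MD I; apply: vext => /=; ring.
have un : dot u u != 0.
  apply/eqP => /dot0 [] h1 h2 h3; apply: he; apply: vext; lra.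
have qn : dot q q != 0.
  apply/eqP => /dot0 [] h1 h2 h3; apply: hf; apply: vext => /=; lra.
exists u; split => // w.
pose p := vadd w (vopp (M w)).
have Mp : M p = vopp p by rewrite /p MD MN I; apply: vext => /=; ring.
have qp := orth _ _ Mq Mp.
have qu := orth _ _ Mq Mu.
have MX : M (cross q p) = cross q p.
  have := C (vadd q p); rewrite MD Mq Mp.
  have -> : cross (vadd q (vopp p)) (vadd q p) = vscale 2 (cross q p).
    by apply: vext => /=; ring.
  rewrite MZ => h; apply: vext.
  - by have := congr1 c1 h => /=; lra.
  - by have := congr1 c2 h => /=; lra.
  - by have := congr1 c3 h => /=; lra.
have Xu := orth _ _ MX Mu.
have gram : (dot (cross q p) u) ^+ 2 = dot q q * dot (cross p u) (cross p u)
   + 2 * dot q p * dot p u * dot q u - dot p p * (dot q u) ^+ 2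
   - dot u u * (dot q p) ^+ 2.
  by rewrite /dot /=; ring.
rewrite Xu qp qu in gram.
have hpu : dot (cross p u) (cross p u) = 0.
  have : dot q q * dot (cross p u) (cross p u) = 0.
    by move: gram; rewrite !expr2; lra.
  by move/eqP; rewrite mulf_eq0 (negbTE qn) /= => /eqP.
have pu0 := dot0 hpu.
have lag : cross u (cross p u) = vadd (vscale (dot u u) p) (vopp (vscale (dot u p) u)).
  by apply: vext; rewrite /dot /=; ring.
rewrite pu0 in lag.
have up : dot u p = 2 * dot u w.
  rewrite /p dotDr dotNr.
  have := Op u (M w); rewrite Mu I dotNl => h; lra.
rewrite -up; apply: vext.
- by have := congr1 c1 lag => /=; lra.
- by have := congr1 c2 lag => /=; lra.
- by have := congr1 c3 lag => /=; lra.
Qed.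
End Vec.
Section Q.
Variable R : realType.
Implicit Types x y : quat R.

Lemma qext x y : q0 x = q0 y -> q1 x = q1 y -> q2 x = q2 y -> q3 x = q3 y -> x = y.
Proof. by case: x; case: y => /= ???? ???? -> -> -> ->. Qed.

Definition pure (v : v3 R) : quat R := Quat 0 (c1 v) (c2 v) (c3 v).
Definition vec x : v3 R := V3 (q1 x) (q2 x) (q3 x).
Definition nsq x := q0 x ^+ 2 + q1 x ^+ 2 + q2 x ^+ 2 + q3 x ^+ 2.

Lemma decomp x : x = qadd (qscale (q0 x) (qone R)) (pure (vec x)).
Proof. by apply: qext => /=; ring. Qed.

Lemma qmul_pure a b : qmul (pure a) (pure b) =
  qadd (qscale (- dot a b) (qone R)) (pure (cross a b)).
Proof. by apply: qext; rewrite /dot /=; ring. Qed.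

Lemma qmul_pure1 a b : qmul (qadd (qone R) (pure a)) (qadd (qone R) (pure b)) =
  qadd (qscale (1 - dot a b) (qone R)) (pure (vadd (vadd a b) (cross a b))).
Proof. by apply: qext; rewrite /dot /=; ring. Qed.

Lemma vec_lin s w : vec (qadd (qscale s (qone R)) (pure w)) = w.
Proof. by apply: vext => /=; ring. Qed.

Lemma refl_expr s u x :
  qmul (qmul (pure (vscale s u)) (qconj x)) (qconj (pure (vscale s u))) =
  qadd (qscale (s ^+ 2 * dot u u * q0 x) (qone R))
    (pure (vscale (s ^+ 2) (vadd (vscale (dot u u) (vec x))
       (vopp (vscale (2 * dot u (vec x)) u))))).
Proof. by apply: qext; rewrite /dot /=; ring. Qed.

Lemma pure_cond (a x : quat R) : q0 a = 0 ->
  qmul (qmul a (qconj (qmul (qmul (qmul a (qconj x)) (qconj a)) x))) (qconj a) =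
  qscale (q1 a ^+ 2 + q2 a ^+ 2 + q3 a ^+ 2) (qmul (qmul (qmul a (qconj x)) (qconj a)) x).
Proof. case: a => a0 a1 a2 a3 /= ->; apply: qext => /=; ring. Qed.

Lemma nsq_norm x : qnorm x ^+ 2 = nsq x.
Proof.
rewrite /qnorm sqr_sqrtr //= /nsq.
by rewrite !addr_ge0 // sqr_ge0.
Qed.

Variable phi : quat R -> quat R.
Hypothesis hlin : qlinear phi.
Hypothesis hiso : qisometry phi.
Hypothesis h1 : phi (qone R) = qone R.

Lemma nsq_phi x : nsq (phi x) = nsq x.
Proof. by rewrite -!nsq_norm hiso. Qed.

Lemma phi_pure v : phi (pure v) = pure (vec (phi (pure v))).
Proof.
have := nsq_phi (qadd (qone R) (pure v)).
have := nsq_phi (pure v).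
rewrite hlin.1 h1.
case: (phi (pure v)) => y0 y1 y2 y3; rewrite /nsq /= => e1 e2.
apply: qext => //=; nra.
Qed.

Definition M v := vec (phi (pure v)).

Lemma phi_lin s w : phi (qadd (qscale s (qone R)) (pure w)) =
  qadd (qscale s (qone R)) (pure (M w)).
Proof. by rewrite hlin.1 hlin.2 h1 phi_pure. Qed.

Lemma MD u v : M (vadd u v) = vadd (M u) (M v).
Proof.
rewrite /M.
have -> : pure (vadd u v) = qadd (pure u) (pure v) by apply: qext => /=; ring.
by rewrite hlin.1.
Qed.

Lemma MZ s v : M (vscale s v) = vscale s (M v).
Proof.
rewrite /M.
have -> : pure (vscale s v) = qscale s (pure v) by apply: qext => /=; ring.
by rewrite hlin.2.
Qed.

Lemma MO v : dot (M v) (M v) = dot v v.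
Proof.
have := nsq_phi (pure v); rewrite phi_pure /M.
case: (vec _) => a b c; case: v => d e f; rewrite /nsq /dot /= => h; nra.
Qed.

Hypothesis hc : forall x, phi (qmul (phi x) x) = qmul (phi x) x.

Lemma MC v : M (cross (M v) v) = cross (M v) v.
Proof.
have := hc (pure v).
rewrite phi_pure -/(M v) qmul_pure phi_lin => /(congr1 vec).
by rewrite !vec_lin.
Qed.

Lemma MI v : M (M v) = v.
Proof.
have := hc (qadd (qone R) (pure v)).
have -> : qadd (qone R) (pure v) = qadd (qscale 1 (qone R)) (pure v).
  by apply: qext => /=; ring.
rewrite phi_lin.
have -> : qadd (qscale 1 (qone R)) (pure (M v)) = qadd (qone R) (pure (M v)).
  by apply: qext => /=; ring.
have -> : qadd (qscale 1 (qone R)) (pure v) = qadd (qone R) (pure v).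
  by apply: qext => /=; ring.
rewrite qmul_pure1 phi_lin => /(congr1 vec); rewrite !vec_lin !MD MC => h.
apply: vext.
- by have := congr1 (@c1 R) h => /=; lra.
- by have := congr1 (@c2 R) h => /=; lra.
- by have := congr1 (@c3 R) h => /=; lra.
Qed.

End Q.
Lemma det4 (R : comNzRingType) (f : nat -> nat -> R) :
  \det (\matrix_(i < 4, j < 4) f i j) =
  f 0 0 * (f 1 1 * (f 2 2 * f 3 3 - f 2 3 * f 3 2)
         - f 1 2 * (f 2 1 * f 3 3 - f 2 3 * f 3 1)
         + f 1 3 * (f 2 1 * f 3 2 - f 2 2 * f 3 1))
  - f 0 1 * (f 1 0 * (f 2 2 * f 3 3 - f 2 3 * f 3 2)
         - f 1 2 * (f 2 0 * f 3 3 - f 2 3 * f 3 0)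
         + f 1 3 * (f 2 0 * f 3 2 - f 2 2 * f 3 0))
  + f 0 2 * (f 1 0 * (f 2 1 * f 3 3 - f 2 3 * f 3 1)
         - f 1 1 * (f 2 0 * f 3 3 - f 2 3 * f 3 0)
         + f 1 3 * (f 2 0 * f 3 1 - f 2 1 * f 3 0))
  - f 0 3 * (f 1 0 * (f 2 1 * f 3 2 - f 2 2 * f 3 1)
         - f 1 1 * (f 2 0 * f 3 2 - f 2 2 * f 3 0)
         + f 1 2 * (f 2 0 * f 3 1 - f 2 1 * f 3 0)).
Proof.
rewrite (expand_det_row _ ord0) !big_ord_recl big_ord0 /cofactor.
rewrite !(expand_det_row _ ord0) !big_ord_recl !big_ord0 /cofactor.
rewrite !(expand_det_row _ ord0) !big_ord_recl !big_ord0 /cofactor !det_mx11 !mxE /bump /=.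
ring.
Qed.

Definition qc (R : realType) (n : nat) (x : quat R) : R :=
  match n with 0 => q0 x | 1 => q1 x | 2 => q2 x | _ => q3 x end.
Definition qb (R : realType) (n : nat) : quat R :=
  match n with 0 => Quat 1 0 0 0 | 1 => Quat 0 1 0 0
             | 2 => Quat 0 0 1 0 | _ => Quat 0 0 0 1 end.

Lemma qdetE (R : realType) (phi : quat R -> quat R) :
  qdet phi = \det (\matrix_(i < 4, j < 4) qc i (phi (qb R j))).
Proof. by []. Qed.

Theorem lemma8 (R : realType) (phi : quat R -> quat R)
  (hlin : qlinear phi) (hiso : qisometry phi) (h1 : phi (qone R) = qone R) :
  ((forall x, phi (qmul (phi x) x) = qmul (phi x) x) <->
     ((forall x, phi x = x) \/ in_I1minus phi)) /\
  (0 < qdet phi -> (forall x, phi (qmul (phi x) x) = qmul (phi x) x) ->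
     forall x, phi x = x).
Proof.
have fwd : (forall x, phi (qmul (phi x) x) = qmul (phi x) x) ->
    (forall x, phi x = x) \/ in_I1minus phi.
  move=> hc.
  have := core (MD hlin) (MZ hlin) (MO hlin hiso h1) (MI hlin hiso h1 hc)
    (MC hlin hiso h1 hc).
  case=> [hI|[hN|[u [un hu]]]].
  - by left => x; rewrite [x in phi x]decomp phi_lin // hI; apply: qext => /=; ring.
  - by right; left => x; rewrite [x in phi x]decomp phi_lin // hN; apply: qext => /=; ring.
  right; right.
  pose n := Num.sqrt (dot u u).
  have u0 : 0 <= dot u u by rewrite /dot; nra.
  have u1 : 0 < dot u u by rewrite lt_def un.
  have n0 : 0 < n by rewrite sqrtr_gt0.
  have nn : n ^+ 2 = dot u u by rewrite sqr_sqrtr.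
  have k : n^-1 ^+ 2 * dot u u = 1.
    by rewrite -nn exprVn mulVf // expf_neq0 // gt_eqF.
  exists (pure (vscale n^-1 u)); split; first by [].
  split.
    rewrite /qnorm /=; transitivity (Num.sqrt (1 : R)); last by rewrite sqrtr1.
    by rewrite -k; congr Num.sqrt; rewrite /dot /=; ring.
  move=> x; rewrite refl_expr k [x in phi x]decomp phi_lin //.
  have := hu (vec x); set Mx := M phi (vec x) => e.
  apply: qext => /=.
  - ring.
  - have e' := congr1 (fun t => n^-1 ^+ 2 * t) (congr1 (@c1 R) e).
    have k' := congr1 (fun t => t * c1 Mx) k.
    move: e' k' => /=; rewrite /dot /=; lra.
  - have e' := congr1 (fun t => n^-1 ^+ 2 * t) (congr1 (@c2 R) e).
    have k' := congr1 (fun t => t * c2 Mx) k.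
    move: e' k' => /=; rewrite /dot /=; lra.
  - have e' := congr1 (fun t => n^-1 ^+ 2 * t) (congr1 (@c3 R) e).
    have k' := congr1 (fun t => t * c3 Mx) k.
    move: e' k' => /=; rewrite /dot /=; lra.
have normN (a : quat R) : q0 a = 0 -> qnorm a = 1 ->
    q1 a ^+ 2 + q2 a ^+ 2 + q3 a ^+ 2 = 1.
  move=> ha hn; have := nsq_norm a; rewrite hn expr1n /nsq ha expr0n /= => ->.
  by rewrite add0r.
split; first split.
- exact: fwd.
- case=> [hI | [hC | [a [ha [hn hphi]]]]] x.
  + by rewrite !hI.
  + by rewrite !hC; apply: qext => /=; ring.
  + rewrite !hphi pure_cond // normN //.
    by apply: qext => /=; ring.
move=> hd hc x.
case: (fwd hc) => [//|hI1]; exfalso.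
case: hI1 => [hC | [a [ha [hn hphi]]]].
- have : qdet phi = -1.
    by rewrite qdetE (det4 (fun a b => qc a (phi (qb R b)))) /= !hC /=; ring.
  move=> e; move: hd; rewrite e => hd; clear -hd; lra.
- have N := normN a ha hn.
  clear hn; move: ha N hphi; case: a => a0 a1 a2 a3 ha0 N hphi; have hz : a0 = 0 := ha0; rewrite /= in N; subst a0.
  have : qdet phi = - (a1 ^+ 2 + a2 ^+ 2 + a3 ^+ 2) ^+ 4.
    by rewrite qdetE (det4 (fun a b => qc a (phi (qb R b)))) /= !hphi /=; ring.
  rewrite N expr1n => e; move: hd; rewrite e => hd; clear -hd; lra.
Qed.
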